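(* Let $\mathcal A$ be a Banach algebra and $I$ a closed two-sided ideal of $\mathcal A$ with $\mathcal A^2\subseteq I$. If $\mathcal A$ is $I$-weakly amenable, then $\mathcal A^2$ is dense in $I$.
   Context: $\mathcal A^2$ denotes the linear span of $\{ab:a,b\in\mathcal A\}$. $I^*$ is a Banach $\mathcal A$-bimodule with $\langle x,a\cdot f\rangle=\langle xa,f\rangle$, $\langle x,f\cdot a\rangle=\langle ax,f\rangle$. $\mathcal A$ is $I$-weakly amenable if every derivation $D:\mathcal A\to I^*$ (continuous linear map with $D(ab)=a\cdot D(b)+D(a)\cdot b$) is inner, i.e. $D(a)=a\cdot f-f\cdot a$ for some $f\in I^*$. *)

(* Defs.v *)
From HB Require Import structures.
From mathcomp Require Import all_boot all_order all_algebra.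
From mathcomp Require Import all_classical all_reals all_analysis.
From mathcomp Require Import complex.
Set Implicit Arguments. Unset Strict Implicit. Unset Printing Implicit Defensive.
Import Order.TTheory GRing.Theory Num.Theory.
Import numFieldNormedType.Exports.
Local Open Scope classical_set_scope.
Local Open Scope ring_scope.

Section Defs.
Variables (K : numFieldType) (A : normedModType K).

(* mul makes A a normed (possibly non-unital) algebra over K;
   together with completeness of A this is a Banach algebra. *)
Definition banach_algebra_mul (mul : A -> A -> A) : Prop :=
  [/\ (forall a b c, mul a (mul b c) = mul (mul a b) c),
      (forall a b c, mul a (b + c) = mul a b + mul a c),
      (forall a b c, mul (a + b) c = mul a c + mul b c),
      (forall (k : K) a b, mul (k *: a) b = k *: mul a b) /\
      (forall (k : K) a b, mul a (k *: b) = k *: mul a b)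
    & (forall a b, `|mul a b| <= `|a| * `|b|)].

Definition closed_ideal (mul : A -> A -> A) (I : set A) : Prop :=
  [/\ I 0,
      (forall x y, I x -> I y -> I (x + y)),
      (forall (k : K) x, I x -> I (k *: x)),
      (forall a x, I x -> I (mul a x) /\ I (mul x a))
    & closed I].

Definition sq_span (mul : A -> A -> A) : set A :=
  [set y | exists n (c : 'I_n -> K) (a b : 'I_n -> A),
           y = \sum_(i < n) c i *: mul (a i) (b i)].

(* Elements of the dual I^* are represented by functions f : A -> K whose
   restriction to I is linear and continuous (bounded); two such functions
   represent the same element of I^* iff they agree on I. *)
Definition in_dual (I : set A) (f : A -> K) : Prop :=
  [/\ (forall x y, I x -> I y -> f (x + y) = f x + f y),
      (forall (k : K) x, I x -> f (k *: x) = k * f x)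
    & exists M : K, forall x, I x -> `|f x| <= M * `|x|].

(* A continuous derivation D : A -> I^*, where
   <x, a.f> = <xa, f> and <x, f.a> = <ax, f>. *)
Definition I_derivation (mul : A -> A -> A) (I : set A) (D : A -> A -> K)
  : Prop :=
  [/\ (forall a, in_dual I (D a)),
      (forall a b x, I x -> D (a + b) x = D a x + D b x),
      (forall (k : K) a x, I x -> D (k *: a) x = k * D a x),
      (exists M : K, forall a x, I x -> `|D a x| <= M * `|a| * `|x|)
    & (forall a b x, I x ->
         D (mul a b) x = D b (mul x a) + D a (mul b x))].

Definition I_inner (mul : A -> A -> A) (I : set A) (D : A -> A -> K) : Prop :=
  exists f, in_dual I f /\
    forall a x, I x -> D a x = f (mul x a) - f (mul a x).

Definition I_weakly_amenable (mul : A -> A -> A) (I : set A) : Prop :=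
  forall D, I_derivation mul I D -> I_inner mul I D.

End Defs.

(* Main.v *)
Require Import Defs.
From HB Require Import structures.
From mathcomp Require Import all_boot all_order all_algebra.
From mathcomp Require Import all_classical all_reals all_analysis.
From mathcomp Require Import complex.
From mathcomp Require Import ring lra.
Set Implicit Arguments. Unset Strict Implicit. Unset Printing Implicit Defensive.
Import Order.TTheory GRing.Theory Num.Theory.
Import numFieldNormedType.Exports.
Local Open Scope classical_set_scope.
Local Open Scope ring_scope.
Local Open Scope complex_scope.

Section HB.
Context (R : realType) (V : lmodType R[i]).

Definition sublin (q : V -> R) :=
  (forall x y, q (x + y) <= q x + q y) /\
  (forall (t : R) x, 0 < t -> q (t%:C *: x) <= t * q x).

Lemma rcM (a b : R) : (a * b)%:C = a%:C * b%:C.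
Proof. exact: rmorphM. Qed.

Lemma sublin0 q : sublin q -> q 0 = 0.
Proof.
case=> hD hZ.
have h1 := hD 0 0; rewrite addr0 in h1.
have h2 := hZ (2^-1) 0; rewrite scaler0 in h2.
have : q 0 <= 2^-1 * q 0 by apply: h2; rewrite invr_gt0.
lra.
Qed.

Lemma sublinN q x : sublin q -> 0 <= q x + q (- x).
Proof. move=> hq; rewrite -(sublin0 hq) -{1}(subrr x); exact: hq.1. Qed.

Lemma sublinZ q (t : R) x : sublin q -> 0 < t -> q (t%:C *: x) = t * q x.
Proof.
move=> hq t0; apply/eqP; rewrite eq_le hq.2 //=.
have := hq.2 t^-1 (t%:C *: x); rewrite invr_gt0 => /(_ t0).
rewrite scalerA -rcM mulVf ?gt_eqF // scale1r => h.
have := ler_wpM2l (ltW t0) h.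
by rewrite mulrA mulfV ?gt_eqF // mul1r.
Qed.

Lemma le_inf_add (E F : set R) z : nonempty E -> nonempty F ->
  (forall e f, E e -> F f -> z <= e + f) -> z <= inf E + inf F.
Proof.
move=> nE nF h.
have h1 : forall f, F f -> z - f <= inf E.
  move=> f Ff; apply: lb_le_inf => // e Ee; have := h e f Ee Ff; lra.
rewrite -lerBlDl; apply: lb_le_inf => // f Ff; have := h1 f Ff; lra.
Qed.

Definition qmod (q : V -> R) (y : V) (x : V) : R :=
  inf [set q (x + t%:C *: y) - t * q y | t in [set t : R | 0 < t]].

Section QM.
Context (q : V -> R) (hq : sublin q) (y : V).

Lemma qmod_lb x t : 0 < t -> - q (- x) <= q (x + t%:C *: y) - t * q y.
Proof.
move=> t0; have := hq.1 (x + t%:C *: y) (- x).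
rewrite addrC addKr sublinZ //; lra.
Qed.

Lemma qmod_ne x : nonempty [set q (x + t%:C *: y) - t * q y | t in [set t : R | 0 < t]].
Proof. by eexists; exists 1; [exact: ltr01|]. Qed.

Lemma qmod_le x t : 0 < t -> qmod q y x <= q (x + t%:C *: y) - t * q y.
Proof.
move=> t0; apply: ge_inf; last by exists t.
by exists (- q (- x)) => _ [s s0 <-]; apply: qmod_lb.
Qed.

Lemma qmod_leq x : qmod q y x <= q x.
Proof.
apply: le_trans (qmod_le x ltr01) _; rewrite scale1r mul1r.
have := hq.1 (x + y) (- y); rewrite addrK.
have := sublinN y hq. 
have := hq.1 x y. lra.
Qed.

Lemma qmod_Ny : qmod q y (- y) <= - q y.
Proof.
apply: le_trans (qmod_le (- y) ltr01) _; rewrite scale1r mul1r addNr sublin0 //; lra.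
Qed.

Lemma qmod_sublin : sublin (qmod q y).
Proof.
split.
- move=> x1 x2; apply: le_inf_add; try exact: qmod_ne.
  move=> _ _ [t1 t10 <-] [t2 t20 <-].
  have t12 : 0 < t1 + t2 by rewrite addr_gt0.
  apply: le_trans (qmod_le (x1 + x2) t12) _.
  rewrite rmorphD scalerDl.
  have := hq.1 (x1 + t1%:C *: y) (x2 + t2%:C *: y).
  rewrite addrACA; lra.
- move=> c x c0.
  have cV : c * c^-1 = 1 by rewrite mulfV ?gt_eqF.
  suff h : c^-1 * qmod q y (c%:C *: x) <= qmod q y x.
    have := ler_wpM2l (ltW c0) h.
    by rewrite mulrA mulfV ?gt_eqF // mul1r.
  apply: lb_le_inf; first exact: qmod_ne.
  move=> _ [t t0 <-].
  rewrite ler_pdivrMl //.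
  apply: le_trans (qmod_le (c%:C *: x) (mulr_gt0 c0 t0)) _.
  rewrite rcM -scalerA -scalerDr sublinZ //; lra.
Qed.
End QM.

Section Zorn.
Context (q0 : V -> R) (hq0 : sublin q0).

Definition goodq (q : V -> R) := sublin q /\ (forall x, q x <= q0 x).
Definition TQ := {q : V -> R | goodq q}.
Definition relQ (a b : TQ) : bool := `[< forall x, sval b x <= sval a x >].

Lemma good_lb (s : TQ) x : - q0 (- x) <= sval s x.
Proof.
case: s => q [hq hle] /=; have := sublinN x hq; have := hle (- x); lra.
Qed.

Lemma chain_lb (Ac : set TQ) : total_on Ac relQ -> exists t, forall s, Ac s -> relQ s t.
Proof.
move=> tot.
have [->|/set0P [s0 As0]] := eqVneq Ac set0.
  by exists (exist _ q0 (conj hq0 (fun x => lexx _))).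
pose qc x := inf [set sval s x | s in Ac].
have ne x : nonempty [set sval s x | s in Ac] by exists (sval s0 x); exists s0.
have lb x : has_lbound [set sval s x | s in Ac].
  by exists (- q0 (- x)) => _ [s _ <-]; apply: good_lb.
have le s x : Ac s -> qc x <= sval s x.
  by move=> As; apply: ge_inf => //; exists s.
have gq : goodq qc.
  split; last by move=> x; apply: le_trans (le s0 x As0) _; case: s0 {As0} => q [].
  split.
  - move=> x y; apply: le_inf_add => // _ _ [s1 As1 <-] [s2 As2 <-].
    have [/asboolP h|/asboolP h] := tot s1 s2 As1 As2.
    + apply: le_trans (le s2 _ As2) _.
      case: s2 {As2} h => q [[hD _] _] /= h.
      apply: le_trans (hD x y) _; have := h x; lra.
    + apply: le_trans (le s1 _ As1) _.
      case: s1 {As1} h => q [[hD _] _] /= h.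
      apply: le_trans (hD x y) _; have := h y; lra.
  - move=> c x c0.
    suff h : c^-1 * qc (c%:C *: x) <= qc x.
      have := ler_wpM2l (ltW c0) h.
      by rewrite mulrA mulfV ?gt_eqF // mul1r.
    apply: lb_le_inf => // _ [s As <-].
    rewrite ler_pdivrMl //; apply: le_trans (le s _ As) _.
    by case: s {As} => q [[_ hZ] _] /=; apply: hZ.
exists (exist _ qc gq) => s As; apply/asboolP => x /=; exact: le.
Qed.

Lemma minimal_linear : exists u : V -> R,
  [/\ forall x y, u (x + y) = u x + u y,
      forall (t : R) x, u (t%:C *: x) = t * u x
    & forall x, u x <= q0 x].
Proof.
have t0 : TQ := exist _ q0 (conj hq0 (fun x => lexx _)).
have [|||t tmin] := @ZL_preorder TQ t0 relQ.
- by move=> t; apply/asboolP => x; exact: lexx.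
- move=> r s t /asboolP h1 /asboolP h2; apply/asboolP => x; exact: le_trans (h2 x) (h1 x).
- exact: chain_lb.
case: t tmin => q [hq hle] tmin.
have hN y : q (- y) = - q y.
  have gm : goodq (qmod q y).
    split; first exact: qmod_sublin.
    by move=> x; apply: le_trans (qmod_leq hq y x) _.
  have /tmin /asboolP /= h : relQ (exist _ q (conj hq hle)) (exist _ _ gm).
    by apply/asboolP => x /=; exact: qmod_leq.
  have := h (- y); have := qmod_Ny hq y; have := sublinN y hq; lra.
have hD x y : q (x + y) = q x + q y.
  apply/eqP; rewrite eq_le hq.1 /=.
  have := hq.1 (- x) (- y); rewrite -opprD !hN; lra.
exists q; split => //.
move=> t x; have [t0'|t0'|->] := ltgtP t 0.
- rewrite -(opprK t) rmorphN scaleNr hN sublinZ //; first lra.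
  by rewrite oppr_gt0.
- exact: sublinZ.
- rewrite rmorph0 scale0r mul0r; exact: sublin0.
Qed.
End Zorn.

Lemma hahn_banach (p : V -> R) (x0 : V) : sublin p -> exists u : V -> R,
  [/\ forall x y, u (x + y) = u x + u y,
      forall (t : R) x, u (t%:C *: x) = t * u x,
      forall x, u x <= p x & p x0 <= u x0].
Proof.
move=> hp.
have [u [uD uZ ule]] := minimal_linear (qmod_sublin hp x0).
exists u; split => // [x|].
  exact: le_trans (ule x) (qmod_leq hp x0 x).
have h1 := ule (- x0); have h2 := qmod_Ny hp x0.
have : u (- x0) = - u x0.
  by have := uZ (-1) x0; rewrite rmorphN rmorph1 scaleN1r mulN1r.
lra.
Qed.
End HB.

Section Main.
Context (R : realType) (A : normedModType R[i]).

Definition nr (z : A) : R := complex.Re `|z|.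

Lemma nrE z : `|z| = (nr z)%:C.
Proof.
rewrite /nr; have := normr_ge0 z; move: (`|z|) => [a b].
by rewrite lecE /= => /andP[/eqP -> _].
Qed.

Lemma nr_ge0 z : 0 <= nr z.
Proof. by have := normr_ge0 z; rewrite lecE => /andP[_]. Qed.

Lemma nrD x y : nr (x + y) <= nr x + nr y.
Proof. by have := ler_normD x y; rewrite !nrE -rmorphD lecR. Qed.

Lemma nrN x : nr (- x) = nr x.
Proof. by rewrite /nr normrN. Qed.

Lemma normC_real (r : R) : `|r%:C| = `|r|%:C.
Proof. by rewrite normc_def /= expr0n addr0 sqrtr_sqr. Qed.

Lemma normi : `|'i : R[i]| = 1.
Proof. by rewrite normc_def /= expr0n add0r expr1n sqrtr1. Qed.

Lemma nrZ (c : R) x : 0 <= c -> nr (c%:C *: x) = c * nr x.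
Proof.
move=> c0; rewrite {1}/nr normrZ ger0_norm ?ler0c // nrE -rmorphM //.
Qed.

Lemma nri x : nr ('i *: x) = nr x.
Proof. by rewrite /nr normrZ normi mul1r. Qed.

Variable mul : A -> A -> A.
Local Notation S := (sq_span mul).

Lemma S0 : S 0.
Proof. by exists 0%N, (fun _ => 0), (fun _ => 0), (fun _ => 0); rewrite big_ord0. Qed.

Lemma Smul a b : S (mul a b).
Proof. by exists 1%N, (fun _ => 1), (fun _ => a), (fun _ => b); rewrite big_ord1 scale1r. Qed.

Lemma SZ k y : S y -> S (k *: y).
Proof.
case=> n [c [a [b ->]]]; exists n, (fun i => k * c i), a, b.
by rewrite scaler_sumr; apply: eq_bigr => i _; rewrite scalerA.
Qed.

Lemma SD y1 y2 : S y1 -> S y2 -> S (y1 + y2).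
Proof.
case=> n1 [c1 [a1 [b1 ->]]] [n2 [c2 [a2 [b2 ->]]]].
exists (n1 + n2)%N, (fun i => match fintype.split i with inl j => c1 j | inr j => c2 j end),
  (fun i => match fintype.split i with inl j => a1 j | inr j => a2 j end),
  (fun i => match fintype.split i with inl j => b1 j | inr j => b2 j end).
rewrite big_split_ord /=; congr (_ + _); apply: eq_bigr => i _.
  by have -> : fintype.split (lshift n2 i) = inl i by exact: (@unsplitK n1 n2 (inl i)).
by have -> : fintype.split (rshift n1 i) = inr i by exact: (@unsplitK n1 n2 (inr i)).
Qed.

Lemma SN y : S y -> S (- y).
Proof. by move=> /(SZ (-1)); rewrite scaleN1r. Qed.

Definition pd (x : A) : R := inf [set nr (x - s) | s in S].

Lemma pd_ne x : nonempty [set nr (x - s) | s in S].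
Proof. by eexists; exists 0; [exact: S0|]. Qed.

Lemma pd_le x s : S s -> pd x <= nr (x - s).
Proof.
move=> Ss; apply: ge_inf; last by exists s.
by exists 0 => _ [t _ <-]; apply: nr_ge0.
Qed.

Lemma pd_sublin : sublin pd.
Proof.
split.
- move=> x y; apply: le_inf_add; try exact: pd_ne.
  move=> _ _ [s1 S1 <-] [s2 S2 <-].
  apply: le_trans (pd_le (x + y) (SD S1 S2)) _.
  rewrite opprD addrACA; exact: nrD.
- move=> c x c0.
  suff h : c^-1 * pd (c%:C *: x) <= pd x.
    have := ler_wpM2l (ltW c0) h.
    by rewrite mulrA mulfV ?gt_eqF // mul1r.
  apply: lb_le_inf; first exact: pd_ne.
  move=> _ [s Ss <-].
  rewrite ler_pdivrMl //.
  apply: le_trans (pd_le _ (SZ c%:C Ss)) _.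
  by rewrite -scalerBr nrZ //; exact: ltW.
Qed.

Lemma pd_nr x : pd x <= nr x.
Proof. by have := pd_le x S0; rewrite subr0. Qed.

Lemma pd_S s : S s -> pd s <= 0.
Proof. by move=> Ss; have := pd_le s Ss; rewrite subrr /nr normr0. Qed.

Lemma pd_pos x0 : ~ closure S x0 -> 0 < pd x0.
Proof.
move=> ncl; rewrite ltNge; apply/negP => hle; apply: ncl.
move=> B /nbhs_ballP [e e0 sub].
have : 0 < complex.Re e /\ e = (complex.Re e)%:C.
  by move: e0 {sub}; case: e => a b; rewrite /= ltcE /= => /andP[/eqP -> ->].
case=> e0' ee.
have hlb : has_lbound [set nr (x0 - s) | s in S].
  by exists 0 => _ [t _ <-]; apply: nr_ge0.
have [_ [s Ss <-] hs] := inf_adherent e0' (conj (pd_ne x0) hlb).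
exists s; split => //; apply: sub; rewrite -ball_normE /= nrE ee ltcR.
rewrite /pd in hle; lra.
Qed.
End Main.

Lemma i2 (R : realType) : 'i * 'i = -1 :> R[i].
Proof. by rewrite -expr2 sqr_i. Qed.

Lemma cid (T : comNzRingType) (i a b U W : T) : i * i = -1 ->
  a * U + b * W - i * (a * W + - b * U) = (a + i * b) * (U - i * W).
Proof.
move=> h.
have z : b * W * (i * i + 1) = 0 by rewrite h addNr mulr0.
by rewrite -[RHS]addr0 -z; ring.
Qed.

Unset Implicit Arguments.
Set Strict Implicit.

Theorem theorem3p8 (R : realType) (A : completeNormedModType R[i])
  (mul : A -> A -> A) (I : set A) :
  banach_algebra_mul mul ->
  closed_ideal mul I ->
  sq_span mul `<=` I ->
  I_weakly_amenable mul I ->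
  I `<=` closure (sq_span mul).
Proof.
move=> _ _ _ hwa x0 Ix0; apply: contrapT => ncl.
have [u [uD uZ ule ux0]] := hahn_banach x0 (pd_sublin mul).
have uN x : u (- x) = - u x.
  by have := uZ (-1) x; rewrite rmorphN rmorph1 scaleN1r mulN1r.
have uS s : sq_span mul s -> u s = 0.
  move=> Ss; have := ule s; have := ule (- s); rewrite uN.
  have := pd_S (SN Ss); have := pd_S Ss; lra.
have u0 : 0 < u x0 by have := pd_pos ncl; lra.
have ub x : `|u x| <= nr x.
  rewrite ler_norml; have := ule x; have := ule (- x); rewrite uN.
  have := pd_nr mul x; have := pd_nr mul (- x); rewrite nrN; lra.
pose phi x := (u x)%:C - 'i * (u ('i *: x))%:C.
have phiD x y : phi (x + y) = phi x + phi y.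
  by rewrite /phi scalerDr !uD !rmorphD; ring.
have phiZ k x : phi (k *: x) = k * phi x.
  rewrite /phi [k]complexE.
  set a := complex.Re k; set b := complex.Im k.
  have e1 : (a%:C + 'i * b%:C) *: x = a%:C *: x + b%:C *: ('i *: x).
    by rewrite scalerDl scalerA mulrC.
  have e2 : 'i *: (a%:C *: x + b%:C *: ('i *: x)) = a%:C *: ('i *: x) + (-b)%:C *: x.
    rewrite scalerDr !scalerA; congr (_ + _); first by rewrite mulrC.
    by rewrite mulrC mulrA i2 mulN1r rmorphN.
  rewrite e1 e2 !uD !uZ.
  set U := u x; set W := u ('i *: x).
  rewrite !rmorphD !rmorphM !rmorphN.
  by apply: cid; exact: i2.
have phiS s : sq_span mul s -> phi s = 0.
  by move=> Ss; rewrite /phi !uS ?rmorph0 ?mulr0 ?subr0 //; apply: SZ.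
have phib x : `|phi x| <= 2 * `|x|.
  apply: le_trans (ler_normB _ _) _.
  rewrite normrM normi mul1r !normC_real nrE -rmorphD.
  rewrite -[2 : R[i]](rmorph_nat (real_complex R)) -rmorphM lecR.
  have := ub x; have := ub ('i *: x); rewrite nri; lra.
pose D a x := phi a * phi x.
have hD : I_derivation mul I D.
  split.
  - move=> a; split.
    + by move=> x y _ _; rewrite /D phiD mulrDr.
    + by move=> k x _; rewrite /D phiZ mulrCA.
    + exists (2 * `|phi a|) => x _; rewrite /D normrM -mulrA mulrCA.
      by apply: ler_wpM2l => //; rewrite mulrC.
  - by move=> a b x _; rewrite /D phiD mulrDl.
  - by move=> k a x _; rewrite /D phiZ mulrA.
  - exists 4 => a x _; rewrite /D normrM.
    have -> : 4 * `|a| * `|x| = (2 * `|a|) * (2 * `|x|) by ring.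
    by apply: ler_pM => //.
  - by move=> a b x _; rewrite /D !(phiS _ (Smul mul _ _)) mul0r !mulr0 addr0.
have [f [_ hf]] := hwa D hD.
have := hf x0 x0 Ix0; rewrite subrr /D => /eqP; rewrite mulf_eq0 orbb => /eqP h0.
have : complex.Re (phi x0) = u x0.
  by rewrite /phi /= mul0r mulr0 subrr subr0.
by rewrite h0 /= => h; move: u0; rewrite -h ltxx.
Qed.
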